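(* The one-dimensional subalgebras of ${\rm S}_2$ are exactly $\langle e_1\rangle$, $\langle e_2\rangle$ and $\langle e_1+\alpha e_2\pm e_3\rangle$ ($\alpha\in\mathbb{C}$). Up to automorphisms of ${\rm S}_2$, every one-dimensional subalgebra is equivalent to one of $\langle e_1\rangle$, $\langle e_2\rangle$, $\langle e_1+e_3\rangle$, $\langle e_1-e_3\rangle$.
   Context: ${\rm S}_2$ is the complex algebra with basis $e_1,e_2,e_3$, unit $e_1$ ($e_1e_i=e_ie_1=e_i$), $e_2e_3=e_2$, $e_3e_2=-e_2$, $e_3e_3=e_1$; all other products of basis elements are zero (involution $\overline{e_1}=e_1$, $\overline{e_2}=-e_2$, $\overline{e_3}=-e_3$, which plays no role here). A subalgebra is a linear subspace closed under multiplication (it need not contain $e_1$). Equivalence up to automorphisms means one is mapped onto the other by an algebra automorphism. $\langle S\rangle$ denotes linear span. *)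

(* Defs.v *)
From HB Require Import structures.
From mathcomp Require Import all_boot all_order all_algebra.
From mathcomp Require Import complex.
From mathcomp Require Import Rstruct.
Set Implicit Arguments. Unset Strict Implicit. Unset Printing Implicit Defensive.
Import Order.TTheory GRing.Theory Num.Theory.
Local Open Scope ring_scope.

Definition C : Type := complex Rdefinitions.R.
HB.instance Definition _ := GRing.Field.on C.

(* The underlying vector space of S_2: C^3, elements written in coordinates
   with respect to the basis e_1, e_2, e_3 (indices 0, 1, 2). *)
Notation S2 := 'rV[C]_3.

Definition e (i : 'I_3) : S2 := delta_mx 0 i.
Definition e1 : S2 := e 0.
Definition e2 : S2 := e 1.
Definition e3 : S2 := e 2%:R.

Definition s2tab (i j : 'I_3) : S2 :=
  match val i, val j with
  | 0%N, _ => e j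
  | _, 0%N => e i
  | 1%N, 2%N => e2
  | 2%N, 1%N => - e2
  | 2%N, 2%N => e1
  | _, _ => 0
  end.

Definition s2mul (x y : S2) : S2 :=
  \sum_(i < 3) \sum_(j < 3) (x 0 i * y 0 j) *: s2tab i j.

(* A subalgebra: a linear subspace closed under multiplication
   (not required to contain e1). *)
Definition is_subalgebra (U : {vspace S2}) : Prop :=
  forall x y, x \in U -> y \in U -> s2mul x y \in U.

Definition is_automorphism (f : 'End(S2)) : Prop :=
  lker f = 0%VS /\ limg f = fullv /\
  forall x y, f (s2mul x y) = s2mul (f x) (f y).

Definition aut_equiv (U V : {vspace S2}) : Prop :=
  exists f : 'End(S2), is_automorphism f /\ (f @: U)%VS = V.

(* Main.v *)
Require Import Defs.
From mathcomp Require Import all_boot all_order all_algebra.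
From mathcomp Require Import ring.
Import GRing.Theory.
Local Open Scope ring_scope.

Definition i0 : 'I_3 := @Ordinal 3 0 isT.
Definition i1 : 'I_3 := @Ordinal 3 1 isT.
Definition i2 : 'I_3 := @Ordinal 3 2 isT.

Lemma row3P (x y : S2) : x 0 i0 = y 0 i0 -> x 0 i1 = y 0 i1 -> x 0 i2 = y 0 i2 -> x = y.
Proof.
move=> h0 h1 h2; apply/rowP => k.
case: k => [[|[|[|//]]] Hk].
- by rewrite (_ : Ordinal Hk = i0) //; apply: val_inj.
- by rewrite (_ : Ordinal Hk = i1) //; apply: val_inj.
- by rewrite (_ : Ordinal Hk = i2) //; apply: val_inj.
Qed.

Lemma eE (i j : 'I_3) : e i 0 j = (i == j)%:R.
Proof. by rewrite /e mxE eqxx eq_sym. Qed.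

Lemma e1E : e1 = \row_j (j == i0)%:R.
Proof. by apply/rowP=> j; rewrite /e1 eE mxE; by case: j => [[|[|[|]]] ?]. Qed.
Lemma e2E : e2 = \row_j (j == i1)%:R.
Proof. by apply/rowP=> j; rewrite /e2 eE mxE; by case: j => [[|[|[|]]] ?]. Qed.
Lemma e3E : e3 = \row_j (j == i2)%:R.
Proof. by apply/rowP=> j; rewrite /e3 eE mxE; by case: j => [[|[|[|]]] ?]. Qed.

Lemma s2mulE x y k : s2mul x y 0 k =
  (x 0 i0 * y 0 i0 + x 0 i2 * y 0 i2) * (k == i0)%:R
  + (x 0 i0 * y 0 i1 + x 0 i1 * y 0 i0 + x 0 i1 * y 0 i2 - x 0 i2 * y 0 i1) * (k == i1)%:R
  + (x 0 i0 * y 0 i2 + x 0 i2 * y 0 i0) * (k == i2)%:R.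
Proof.
rewrite /s2mul summxE; under eq_bigr => i _ do rewrite summxE.
rewrite !big_ord_recl !big_ord0 /s2tab /=.
have L0 : ord0 = i0 by apply: val_inj.
have L1 : lift ord0 ord0 = i1 :> 'I_3 by apply: val_inj.
have L2 : lift ord0 (lift ord0 ord0) = i2 :> 'I_3 by apply: val_inj.
have E1 : e1 = e i0 by rewrite /e1; congr e; apply: val_inj.
have E2 : e2 = e i1 by rewrite /e2; congr e; apply: val_inj.
rewrite L2 L1 L0 E1 E2 !mxE /=.
ring.
Qed.

Lemma m0 x y : s2mul x y 0 i0 = x 0 i0 * y 0 i0 + x 0 i2 * y 0 i2.
Proof. rewrite s2mulE /=; ring. Qed.
Lemma m1 x y : s2mul x y 0 i1 = x 0 i0 * y 0 i1 + x 0 i1 * y 0 i0 + x 0 i1 * y 0 i2 - x 0 i2 * y 0 i1.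
Proof. rewrite s2mulE /=; ring. Qed.
Lemma m2 x y : s2mul x y 0 i2 = x 0 i0 * y 0 i2 + x 0 i2 * y 0 i0.
Proof. rewrite s2mulE /=; ring. Qed.

Ltac crd := apply: row3P; rewrite ?(m0,m1,m2,e1E,e2E,e3E,mxE) /=; ring.

Lemma s2mulZ a b x y : s2mul (a *: x) (b *: y) = (a * b) *: s2mul x y.
Proof. crd. Qed.

Lemma line_sub v : is_subalgebra <[v]> <-> s2mul v v \in <[v]>%VS.
Proof.
split; first by move=> H; apply: H; apply: memv_line.
move=> /vlineP [l hl] x y /vlineP [a ->] /vlineP [b ->].
by apply/vlineP; exists (a * b * l); rewrite s2mulZ hl scalerA.
Qed.

Lemma dim1 (U : {vspace S2}) : \dim U = 1%N -> exists2 v, v != 0 & U = <[v]>%VS.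
Proof.
move=> hd; exists (vpick U).
  by rewrite vpick0 -dimv_eq0 hd.
apply/eqP; rewrite eq_sym eqEdim -memvE memv_pick hd dim_vline /=.
by rewrite vpick0 -dimv_eq0 hd.
Qed.

Lemma lineZ (k : C) (v : S2) : k != 0 -> <[k *: v]>%VS = <[v]>%VS.
Proof.
move=> hk; apply/eqP; rewrite eqEdim -memvE memvZ ?memv_line // !dim_vline.
by rewrite scaler_eq0 (negbTE hk) /=.
Qed.

Lemma not2a (a c l : C) : a != 0 -> c != a -> c != - a -> a * a + c * c = l * a -> l != 2 * a.
Proof.
move=> ha hca hcna h; apply/negP => /eqP hl.
have : (c - a) * (c + a) = 0.
  have -> : (c - a) * (c + a) = (a * a + c * c) - (2 * a) * a by ring.
  by rewrite h hl subrr.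
move/eqP; rewrite mulf_eq0 subr_eq0 addr_eq0 (negbTE hca) (negbTE hcna).
done.
Qed.

Lemma part1_dir (U : {vspace S2}) : \dim U = 1%N -> is_subalgebra U ->
     [\/ U = <[e1]>%VS, U = <[e2]>%VS,
         (exists a : C, U = <[e1 + a *: e2 + e3]>%VS)
       | (exists a : C, U = <[e1 + a *: e2 - e3]>%VS)].
Proof.
move=> hd hs; have [v nz hU] := dim1 _ hd; rewrite hU in hs *.
have /vlineP [l hl] : s2mul v v \in <[v]>%VS by apply/line_sub.
have h0 := congr1 (fun w : S2 => w 0 i0) hl; rewrite /= m0 mxE in h0.
have h1 := congr1 (fun w : S2 => w 0 i1) hl; rewrite /= m1 mxE in h1.
have h2 := congr1 (fun w : S2 => w 0 i2) hl; rewrite /= m2 mxE in h2.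
have [ha|ha] := eqVneq (v 0 i0) 0.
  have hc : v 0 i2 = 0.
    rewrite ha mul0r add0r mulr0 in h0.
    by move/eqP: h0; rewrite mulf_eq0 orbb => /eqP.
  have ev : v = v 0 i1 *: e2.
    by apply: row3P; rewrite ?e2E !mxE /= ?ha ?hc; ring.
  have hb : v 0 i1 != 0.
    by apply: contraNneq nz => hb; rewrite ev hb scale0r.
  by apply: Or42; rewrite ev lineZ.
have [hca|hca] := eqVneq (v 0 i2) (v 0 i0).
  apply: Or43; exists (v 0 i1 / v 0 i0).
  have ev : v = v 0 i0 *: (e1 + (v 0 i1 / v 0 i0) *: e2 + e3).
    apply: row3P; rewrite ?e1E ?e2E ?e3E !mxE /= ?hca; field; exact: ha.
  by rewrite [in LHS]ev lineZ.
have [hcna|hcna] := eqVneq (v 0 i2) (- v 0 i0).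
  apply: Or44; exists (v 0 i1 / v 0 i0).
  have ev : v = v 0 i0 *: (e1 + (v 0 i1 / v 0 i0) *: e2 - e3).
    apply: row3P; rewrite ?e1E ?e2E ?e3E !mxE /= ?hcna; field; exact: ha.
  by rewrite [in LHS]ev lineZ.
have hl2 := not2a _ _ _ ha hca hcna h0.
have hl2' : 2 * v 0 i0 - l != 0 by rewrite subr_eq0 eq_sym.
have hb : v 0 i1 = 0.
  have : (2 * v 0 i0 - l) * v 0 i1 = 0 by rewrite mulrBl -h1; ring.
  by move/eqP; rewrite mulf_eq0 (negbTE hl2') => /eqP.
have hc : v 0 i2 = 0.
  have : (2 * v 0 i0 - l) * v 0 i2 = 0 by rewrite mulrBl -h2; ring.
  by move/eqP; rewrite mulf_eq0 (negbTE hl2') => /eqP.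
have ev : v = v 0 i0 *: e1.
  by apply: row3P; rewrite ?e1E !mxE /= ?hb ?hc; ring.
by apply: Or41; rewrite ev lineZ.
Qed.

Lemma nzc (v : S2) i : v 0 i != 0 -> v != 0.
Proof. by apply: contraNneq => ->; rewrite mxE. Qed.

Lemma line_ok (v : S2) l i : v 0 i != 0 -> s2mul v v = l *: v ->
  \dim <[v]> = 1%N /\ is_subalgebra <[v]>.
Proof.
move=> hi hl; split; first by rewrite dim_vline (nzc _ _ hi).
by apply/line_sub; rewrite hl memvZ ?memv_line.
Qed.

Definition shM (b : C) : 'M[C]_3 := 1%:M + b *: delta_mx i2 i1.
Definition sh (b : C) : 'End(S2) := linfun (mulmxr (shM b)).

Lemma shE b x k : sh b x 0 k = x 0 k + b * x 0 i2 * (k == i1)%:R.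
Proof.
rewrite /sh lfunE /= mxE !big_ord_recl big_ord0 /shM !mxE.
have L0 : ord0 = i0 by apply: val_inj.
have L1 : lift ord0 ord0 = i1 :> 'I_3 by apply: val_inj.
have L2 : lift ord0 (lift ord0 ord0) = i2 :> 'I_3 by apply: val_inj.
rewrite L2 L1 L0 /=.
have -> : (i0 == k) = (k == i0) by rewrite eq_sym.
have -> : (i1 == k) = (k == i1) by rewrite eq_sym.
have -> : (i2 == k) = (k == i2) by rewrite eq_sym.
case: k => [[|[|[|//]]] Hk] /=.
- by rewrite (_ : Ordinal Hk = i0); [ring | apply: val_inj].
- by rewrite (_ : Ordinal Hk = i1); [ring | apply: val_inj].
- by rewrite (_ : Ordinal Hk = i2); [ring | apply: val_inj].
Qed.

Lemma sh0 b x : sh b x 0 i0 = x 0 i0. Proof. by rewrite shE /=; ring. Qed.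
Lemma sh1 b x : sh b x 0 i1 = x 0 i1 + b * x 0 i2. Proof. by rewrite shE /=; ring. Qed.
Lemma sh2 b x : sh b x 0 i2 = x 0 i2. Proof. by rewrite shE /=; ring. Qed.

Lemma shK b : cancel (sh b) (sh (- b)).
Proof. move=> x; apply: row3P; rewrite ?(sh0,sh1,sh2); ring. Qed.

Lemma sh_aut b : is_automorphism (sh b).
Proof.
split; first by apply/eqP/lker0P; apply: can_inj (shK b).
split.
  apply/eqP; rewrite eqEsubv subvf /=; apply/subvP => x _.
  by rewrite -[x](shK (- b)) opprK; apply: memv_img; apply: memvf.
by move=> x y; apply: row3P; rewrite ?(sh0,sh1,sh2,m0,m1,m2); ring.
Qed.


Lemma aeq (v w : S2) b : sh b v = w -> aut_equiv <[v]>%VS <[w]>%VS.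
Proof. by move=> h; exists (sh b); split; [exact: sh_aut | rewrite limg_line h]. Qed.

Theorem mainTheorem16 :
  (forall U : {vspace S2},
     (\dim U = 1%N /\ is_subalgebra U) <->
     [\/ U = <[e1]>%VS, U = <[e2]>%VS,
         (exists a : C, U = <[e1 + a *: e2 + e3]>%VS)
       | (exists a : C, U = <[e1 + a *: e2 - e3]>%VS)]) /\
  (forall U : {vspace S2},
     \dim U = 1%N -> is_subalgebra U ->
     [\/ aut_equiv U <[e1]>%VS, aut_equiv U <[e2]>%VS,
         aut_equiv U <[e1 + e3]>%VS | aut_equiv U <[e1 - e3]>%VS]).
Proof.
split.
  move=> U; split; first by case; apply: part1_dir.
  case=> [->|->|[a ->]|[a ->]].
  - apply: (line_ok _ 1 i0); first by rewrite e1E mxE /= oner_eq0.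
    by crd.
  - apply: (line_ok _ 0 i1); first by rewrite e2E mxE /= oner_eq0.
    by crd.
  - apply: (line_ok _ 2 i0); first by rewrite ?(e1E,e2E,e3E,mxE) /= ?mulr0 !addr0 oner_eq0.
    by crd.
  - apply: (line_ok _ 2 i0); first by rewrite ?(e1E,e2E,e3E,mxE) /= ?mulr0 ?oppr0 !addr0 oner_eq0.
    by crd.
move=> U hd hs; case: (part1_dir _ hd hs) => [->|->|[a ->]|[a ->]].
- by apply: Or41; apply: (aeq _ _ 0); apply: row3P; rewrite ?(sh0,sh1,sh2,e1E,mxE) /=; ring.
- by apply: Or42; apply: (aeq _ _ 0); apply: row3P; rewrite ?(sh0,sh1,sh2,e2E,mxE) /=; ring.
- by apply: Or43; apply: (aeq _ _ (- a)); apply: row3P; rewrite ?(sh0,sh1,sh2,e1E,e2E,e3E,mxE) /=; ring.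
- by apply: Or44; apply: (aeq _ _ a); apply: row3P; rewrite ?(sh0,sh1,sh2,e1E,e2E,e3E,mxE) /=; ring.
Qed.
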